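(* Let $n\ge 1$ and $0\le \ell\le n$ be integers, let $\lambda=\max\{\ell,n-\ell\}$, and consider the classical encryption scheme defined in the context. Let $X,X'$ be independent, identically distributed random variables on $\{0,1\}^n$ (the plaintext distribution), let $K,K'$ be independent and uniform on $\{0,1\}^\ell$, let $U,U'$ be independent and uniform on $\{0,1\}^\lambda$, and let $V,V'$ be independent and uniform on $\{0,1\}^{n-\ell}$, all these variables being mutually independent. Then $$\Pr\big[\mathsf{Enc}_{UV}(K,X)=\mathsf{Enc}_{U'V'}(K',X')\big]\;\le\;2^{-2n}\Big(1+2^{\,n-\ell-\mathsf H_2(X)}\Big),$$ where $\mathsf H_2(X)=-\log_2\sum_x \Pr[X=x]^2$ is the collision entropy.
   Context: Bit strings are identified with elements of the finite field $\mathrm{GF}(2^\lambda)$ via the polynomial representation (a string of length at most $\lambda$ is viewed as a polynomial of degree $<\lambda$, padded with zeros); addition is bitwise XOR, denoted $\oplus$ or $+$. For a field element $w$, $(w)_{\rm lsb}$ denotes its last (least significant) $n-\ell$ bits, i.e. the polynomial reduced modulo $x^{n-\ell}$. For $u\in\{0,1\}^\lambda$, $v\in\{0,1\}^{n-\ell}$ and key $k\in\{0,1\}^\ell$ define $h_{uv}(k)=k\,\|\,\big((uk)_{\rm lsb}+v\big)\in\{0,1\}^n$, where $\|$ is concatenation and $uk$ is the product in $\mathrm{GF}(2^\lambda)$. The (randomized) encryption of a plaintext $x\in\{0,1\}^n$ is $\mathsf{Enc}_{uv}(k,x)=(u,v,x\oplus h_{uv}(k))$, with $u,v$ drawn uniformly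 at random; decryption is $\mathsf{Dec}(k,(c_1,c_2,c_3))=c_3\oplus h_{c_1c_2}(k)$. Logarithms are base 2. *)

(* Defs.v *)
From HB Require Import structures.
From mathcomp Require Import all_boot all_order all_algebra.
From mathcomp Require Import all_classical all_reals all_analysis.
Set Implicit Arguments. Unset Strict Implicit. Unset Printing Implicit Defensive.
Import Order.TTheory GRing.Theory Num.Theory.
Local Open Scope ring_scope.

(* Bit strings of length m are row vectors over 'F_2; XOR is addition. *)
Notation bits m := 'rV['F_2]_m.

Definition poly_of_bits m (w : bits m) : {poly 'F_2} := \sum_(i < m) w 0 i *: 'X^i.

(* Product u*k in GF(2^lam) = F_2[X]/(p), p irreducible of degree lam,
   then (.)_lsb : reduction mod X^(n-l), i.e. the coefficients of degree < n-l. *)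
Definition lsb_mul (p : {poly 'F_2}) lam l n (u : bits lam) (k : bits l)
  : bits (n - l) :=
  \row_(i < n - l) (((poly_of_bits u * poly_of_bits k) %% p)`_i).

Definition hfun (p : {poly 'F_2}) lam l n (hl : (l <= n)%N)
  (u : bits lam) (v : bits (n - l)) (k : bits l) : bits n :=
  castmx (erefl 1%N, subnKC hl) (row_mx k (lsb_mul p n u k + v)).

Definition Enc (p : {poly 'F_2}) lam l n (hl : (l <= n)%N)
  (u : bits lam) (v : bits (n - l)) (k : bits l) (x : bits n)
  : bits lam * bits (n - l) * bits n :=
  (u, v, x + hfun p hl u v k).

Definition unif (R : realType) (T : finType) : R := (#|{: T}|%:R)^-1.

Definition is_distr (R : realType) (T : finType) (P : T -> R) : Prop :=
  (forall t, 0 <= P t) /\ \sum_(t : T) P t = 1.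

Definition log2 (R : realType) (x : R) : R := ln x / ln 2.

Definition H2 (R : realType) (T : finType) (P : T -> R) : R :=
  - log2 (\sum_(t : T) P t ^+ 2).

(* Pr[Enc_{UV}(K,X) = Enc_{U'V'}(K',X')] for X,X' iid ~ P, K,K',U,U',V,V'
   uniform, all mutually independent: the sum over the product space. *)
Definition collision_prob (R : realType) (p : {poly 'F_2}) lam l n
  (hl : (l <= n)%N) (P : bits n -> R) : R :=
  \sum_(x : bits n) \sum_(x' : bits n)
  \sum_(k : bits l) \sum_(k' : bits l)
  \sum_(u : bits lam) \sum_(u' : bits lam)
  \sum_(v : bits (n - l)) \sum_(v' : bits (n - l))
    P x * P x' * unif R (bits l) * unif R (bits l)
    * unif R (bits lam) * unif R (bits lam)
    * unif R (bits (n - l)) * unif R (bits (n - l))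
    * (Enc p hl u v k x == Enc p hl u' v' k' x')%:R.

(* Main.v *)
Require Import Defs.
From HB Require Import structures.
From mathcomp Require Import all_boot all_order all_algebra.
From mathcomp Require Import all_classical all_reals all_analysis.
From mathcomp Require Import ring zify.
Import Order.TTheory GRing.Theory Num.Theory.
Local Open Scope ring_scope.

Lemma pob_poly m (w : bits m) : poly_of_bits w =
  \poly_(i < m) (if @insub _ (fun k => k < m)%N 'I_m i is Some j then w 0 j else 0).
Proof. by rewrite poly_def /poly_of_bits; apply: eq_bigr => j _; rewrite valK. Qed.

Lemma coef_pob m (w : bits m) (j : 'I_m) : (poly_of_bits w)`_j = w 0 j.
Proof. by rewrite pob_poly coef_poly ltn_ord valK. Qed.

Lemma size_pob m (w : bits m) : (size (poly_of_bits w) <= m)%N.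
Proof. by rewrite pob_poly size_poly. Qed.

Lemma pobB m (a b : bits m) : poly_of_bits (a - b) = poly_of_bits a - poly_of_bits b.
Proof.
rewrite /poly_of_bits -sumrB; apply: eq_bigr => j _.
by rewrite !mxE scalerBl.
Qed.

Lemma pob_inj m : injective (@poly_of_bits m).
Proof.
move=> a b e; apply/rowP => j.
have := congr1 (fun q : {poly _} => q`_j) e; rewrite /= !coef_pob => ->.
done.
Qed.

Lemma pob0 m : poly_of_bits (0 : bits m) = 0.
Proof. by rewrite /poly_of_bits big1 // => j _; rewrite mxE scale0r. Qed.

Lemma lsbB (p : {poly 'F_2}) lam l n (u : bits lam) (a b : bits l) :
  lsb_mul p n u (a - b) = lsb_mul p n u a - lsb_mul p n u b.
Proof.
apply/rowP => j; rewrite !mxE pobB mulrBr modpD modpN coefD coefN //.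
Qed.

Lemma lsb0 (p : {poly 'F_2}) lam l n (u : bits lam) :
  lsb_mul p n u (0 : bits l) = 0.
Proof. by apply/rowP => j; rewrite !mxE pob0 mulr0 mod0p coef0. Qed.

Lemma card_bits m : #|{: bits m}| = (2 ^ m)%N.
Proof. by rewrite card_mx card_Fp // mul1n. Qed.

Lemma count_lsb (p : {poly 'F_2}) lam l n (hp : irreducible_poly p)
  (hs : size p = lam.+1) (h1 : (l <= lam)%N) (h2 : (n - l <= lam)%N)
  (d : bits l) (w : bits (n - l)) : d != 0 ->
  (#|[set u : bits lam | lsb_mul p n u d == w]| <= 2 ^ (lam - (n - l)))%N.
Proof.
move=> dn0.
pose g (u : bits lam) := (poly_of_bits u * poly_of_bits d) %% p.
pose phi (u : bits lam) : bits (lam - (n - l)) :=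
  \row_(j < lam - (n - l)) (g u)`_(j + (n - l)).
rewrite -card_bits; apply: (@leq_card_in _ _ phi) => u1 u2.
rewrite !inE => /eqP e1 /eqP e2 ephi.
have pn0 : p != 0 by rewrite -size_poly_eq0 hs.
have sg u : (size (g u) <= lam)%N by rewrite -ltnS -hs ltn_modp.
have eg : g u1 = g u2.
  apply/polyP => i.
  case: (ltnP i (n - l)) => [ilt|ige].
    have := congr1 (fun r : bits (n - l) => r 0 (Ordinal ilt)) (etrans e1 (esym e2)).
    by rewrite /= !mxE.
  case: (ltnP i lam) => [ilt|ige2]; last first.
    by rewrite !nth_default // (leq_trans (sg _) ige2).
  have jlt : (i - (n - l) < lam - (n - l))%N by rewrite ltn_sub2r // (leq_ltn_trans _ ilt).
  have := congr1 (fun r : bits _ => r 0 (Ordinal jlt)) ephi.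
  by rewrite /= !mxE subnK.
have pd0 : poly_of_bits d != 0.
  by apply: contra dn0 => /eqP e; apply/eqP; apply: pob_inj; rewrite e pob0.
have ndvd : ~~ (p %| poly_of_bits d).
  rewrite gtNdvdp // hs ltnS (leq_trans (size_pob _ d)) //.
have cop : coprimep p (poly_of_bits d) by rewrite irreducible_poly_coprime.
have : p %| poly_of_bits (u1 - u2).
  rewrite -(Gauss_dvdpl _ cop) pobB mulrBl /dvdp modpD modpN.
  by rewrite -/(g u1) -/(g u2) eg subrr.
apply: contraTeq => ne; rewrite gtNdvdp //.
  by apply: contra ne => /eqP e; rewrite -subr_eq0; apply/eqP; apply: pob_inj; rewrite e pob0.
by rewrite hs ltnS size_pob.
Qed.
Set Implicit Arguments. Unset Strict Implicit.

Definition cst l n (hl : (l <= n)%N) (x : bits n) : 'rV['F_2]_(l + (n - l)) :=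
  castmx (erefl 1%N, esym (subnKC hl)) x.
Definition xl l n (hl : (l <= n)%N) (x : bits n) : bits l := lsubmx (cst hl x).
Definition xr l n (hl : (l <= n)%N) (x : bits n) : bits (n - l) := rsubmx (cst hl x).

Lemma cst_inj l n (hl : (l <= n)%N) : injective (cst hl).
Proof.
apply: (can_inj (g := castmx (erefl 1%N, subnKC hl))) => x.
by rewrite /cst castmx_comp castmx_id.
Qed.

Lemma xlr_inj l n (hl : (l <= n)%N) (x x' : bits n) :
  xl hl x = xl hl x' -> xr hl x = xr hl x' -> x = x'.
Proof.
move=> e1 e2; apply: (@cst_inj _ _ hl).
by rewrite -[cst hl x]hsubmxK -[cst hl x']hsubmxK /xl /xr in e1 e2 *; rewrite e1 e2.
Qed.

Lemma row_mx_eqb (m1 m2 : nat) (a c : 'rV['F_2]_m1) (b d : 'rV['F_2]_m2) :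
  (row_mx a b == row_mx c d) = (a == c) && (b == d).
Proof.
by apply/eqP/andP => [/eq_row_mx [-> ->] | [/eqP -> /eqP ->]].
Qed.

Lemma split_eq (p : {poly 'F_2}) lam l n (hl : (l <= n)%N) (u : bits lam)
  (v : bits (n - l)) (k k' : bits l) (x x' : bits n) :
  (x + hfun p hl u v k == x' + hfun p hl u v k') =
  (xl hl x + k == xl hl x' + k') &&
  (xr hl x + lsb_mul p n u k == xr hl x' + lsb_mul p n u k').
Proof.
have cD (A B : bits n) : cst hl (A + B) = cst hl A + cst hl B.
  by apply/matrixP => i j; rewrite !(castmxE, mxE).
have ch (kk : bits l) : cst hl (hfun p hl u v kk) = row_mx kk (lsb_mul p n u kk + v).
  by rewrite /cst /hfun castmx_comp castmx_id.
rewrite -(inj_eq (@cst_inj l n hl)) !cD !ch -[cst hl x]hsubmxK -[cst hl x']hsubmxK.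
rewrite !add_row_mx row_mx_eqb !addrA (inj_eq (addIr v)) //.
Qed.

Lemma sum_ind (R : numDomainType) (T : finType) (b : pred T) :
  \sum_(t : T) (b t)%:R = #|[set t | b t]|%:R :> R.
Proof.
rewrite (eq_bigr (fun t => if b t then 1 else 0)); last by move=> t _; case: (b t).
by rewrite -big_mkcond sumr_const cardsE.
Qed.

Lemma sum_ind_le (R : numDomainType) (T : finType) (b : pred T) (c : bool) :
  (forall t, b t -> c) -> \sum_(t : T) (b t)%:R <= #|{: T}|%:R * c%:R :> R.
Proof.
move=> h; case: c h => h.
  rewrite mulr1 -sumr_const; apply: ler_sum => t _; by case: (b t).
rewrite mulr0 big1 // => t _; case: (b t) (h t) => // /(_ isT) //.
Qed.

Lemma lsbN (p : {poly 'F_2}) lam l n (u : bits lam) (a : bits l) :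
  lsb_mul p n u (- a) = - lsb_mul p n u a.
Proof. by have := lsbB p lam l n u 0 a; rewrite lsb0 !sub0r. Qed.

Lemma lsbD (p : {poly 'F_2}) lam l n (u : bits lam) (a b : bits l) :
  lsb_mul p n u (a + b) = lsb_mul p n u a + lsb_mul p n u b.
Proof. by have := lsbB p lam l n u a (- b); rewrite opprK lsbN opprK. Qed.

Lemma Enc_eq (p : {poly 'F_2}) lam l n (hl : (l <= n)%N) u v k x u' v' k' x' :
  (@Enc p lam l n hl u v k x == Enc p hl u' v' k' x') =
  [&& u == u', v == v' & x + hfun p hl u v k == x' + hfun p hl u' v' k'].
Proof. by rewrite /Enc !xpair_eqE andbA. Qed.

Lemma pair_bound (R : realFieldType) (p : {poly 'F_2}) lam l n (hl : (l <= n)%N)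
  (hp : irreducible_poly p) (hs : size p = lam.+1) (h1 : (l <= lam)%N)
  (h2 : (n - l <= lam)%N) (x x' : bits n) :
  \sum_(k : bits l) \sum_(k' : bits l) \sum_(u : bits lam) \sum_(u' : bits lam)
  \sum_(v : bits (n - l)) \sum_(v' : bits (n - l))
    (Enc p hl u v k x == Enc p hl u' v' k' x')%:R
  <= #|{: bits l}|%:R * #|{: bits (n - l)}|%:R *
     (#|{: bits lam}|%:R * (x == x')%:R + (2 ^ (lam - (n - l)))%:R) :> R.
Proof.
have step1 k k' u : \sum_(u' : bits lam) \sum_(v : bits (n - l)) \sum_(v' : bits (n - l))
    (Enc p hl u v k x == Enc p hl u' v' k' x')%:R
    = \sum_(v : bits (n - l)) (x + hfun p hl u v k == x' + hfun p hl u v k')%:R :> R.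
  rewrite (bigD1 u) //= [X in _ + X]big1 ?addr0; last first.
    move=> u' ne; rewrite big1 // => v _; rewrite big1 // => v' _.
    by rewrite Enc_eq [u == u']eq_sym (negbTE ne).
  apply: eq_bigr => v _; rewrite (bigD1 v) //= big1 ?addr0; last first.
    by move=> v' ne; rewrite Enc_eq eqxx [v == v']eq_sym (negbTE ne).
  by rewrite Enc_eq !eqxx.
pose cond (k k' : bits l) (u : bits lam) := (xl hl x + k == xl hl x' + k') &&
  (xr hl x + lsb_mul p n u k == xr hl x' + lsb_mul p n u k').
have step2 k k' u : \sum_(v : bits (n - l)) (x + hfun p hl u v k == x' + hfun p hl u v k')%:R
   = #|{: bits (n - l)}|%:R * (cond k k' u)%:R :> R.
  rewrite (eq_bigr (fun _ => (cond k k' u)%:R)) => [|v _]; last by rewrite split_eq.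
  by rewrite sumr_const mulr_natl.
pose cond' (u : bits lam) := xr hl x == xr hl x' + lsb_mul p n u (xl hl x - xl hl x').
have step3 k u : \sum_(k' : bits l) #|{: bits (n - l)}|%:R * (cond k k' u)%:R
   = #|{: bits (n - l)}|%:R * (cond' u)%:R :> R.
  rewrite (bigD1 (xl hl x + k - xl hl x')) //= big1 ?addr0; last first.
    move=> k' ne; rewrite /cond.
    suff -> : (xl hl x + k == xl hl x' + k') = false by rewrite mulr0.
    apply: negbTE; apply: contra ne => /eqP ->.
    by rewrite addrC addKr.
  rewrite /cond /cond' (addrC (xl hl x')) subrK eqxx /=.
  have -> : xl hl x + k - xl hl x' = k + (xl hl x - xl hl x') by rewrite addrA (addrC k).
  by rewrite lsbD addrCA (addrC (xr hl x)) (inj_eq (addrI _)).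
have -> : \sum_(k : bits l) \sum_(k' : bits l) \sum_(u : bits lam) \sum_(u' : bits lam)
  \sum_(v : bits (n - l)) \sum_(v' : bits (n - l))
    (Enc p hl u v k x == Enc p hl u' v' k' x')%:R
  = \sum_(k : bits l) \sum_(u : bits lam) #|{: bits (n - l)}|%:R * (cond' u)%:R :> R.
  apply: eq_bigr => k _; rewrite exchange_big; apply: eq_bigr => u _.
  rewrite -(step3 k u); apply: eq_bigr => k' _.
  by rewrite step1 step2.
rewrite sumr_const -[X in X <= _]mulr_natl -mulr_sumr mulrA.
apply: ler_wpM2l; first by rewrite mulr_ge0 ?ler0n.
case E: (xl hl x == xl hl x').
  apply: (@le_trans _ _ (#|{: bits lam}|%:R * (x == x')%:R)); last by rewrite lerDl ler0n.
  apply: (@sum_ind_le R _ cond' (x == x')) => u; rewrite /cond' (eqP E) subrr lsb0 addr0 => /eqP e.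
  by apply/eqP; apply: (@xlr_inj _ _ hl); [exact/eqP | exact: e].
apply: (@le_trans _ _ (2 ^ (lam - (n - l)))%:R); first last.
  by rewrite lerDr mulr_ge0 ?ler0n.
rewrite sum_ind ler_nat.
have -> : [set u | cond' u] = [set u | lsb_mul p n u (xl hl x - xl hl x') == xr hl x - xr hl x'].
  by apply/setP => u; rewrite !inE /cond'; apply/eqP/eqP => [->|->]; [rewrite (addrC (xr hl x')) addrK | rewrite subrKC].
apply: count_lsb => //.
by rewrite subr_eq0 E.
Qed.
Unset Implicit Arguments. Set Strict Implicit.

Lemma dsum (R : comNzRingType) (T : finType) (P : T -> R) (c A N K : R) :
  \sum_t P t = 1 ->
  \sum_(x : T) \sum_(y : T) P x * P y * c * (A * (N * (x == y)%:R + K))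
  = c * A * (N * \sum_t P t ^+ 2 + K).
Proof.
move=> hP1.
have e x : \sum_(y : T) P x * P y * c * (A * (N * (x == y)%:R + K))
   = c * A * N * P x ^+ 2 + c * A * K * P x.
  rewrite (eq_bigr (fun y => c*A*N*P x * ((x == y)%:R * P y) + c*A*K*P x * P y)) => [|y _]; last by ring.
  rewrite big_split /= -!mulr_sumr hP1 mulr1.
  rewrite (bigD1 x) //= eqxx mul1r big1 ?addr0 => [|y ne]; last by rewrite eq_sym (negbTE ne) mul0r.
  by rewrite expr2 !mulrA.
rewrite (eq_bigr _ (fun x _ => e x)) big_split /= -!mulr_sumr hP1.
ring.
Qed.

Lemma pow2_frac (R : realFieldType) a b c d : (a + d <= c + b)%N ->
  (2 ^+ b)^-1 * 2 ^+ a <= (2 ^+ d)^-1 * 2 ^+ c :> R.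
Proof.
move=> h; rewrite mulrC [X in _ <= X]mulrC ler_pdivrMr ?exprn_gt0 //.
rewrite mulrAC ler_pdivlMr ?exprn_gt0 // -!exprD.
by rewrite ler_eXn2l ?ltr1n // addnC.
Qed.

Theorem theorem1 (R : realType) (n l : nat) (hn : (1 <= n)%N) (hl : (l <= n)%N)
  (p : {poly 'F_2})
  (hp : irreducible_poly p) (hsize : size p = (maxn l (n - l)).+1)
  (P : bits n -> R) (hP : is_distr P) :
  @collision_prob R p (maxn l (n - l)) l n hl P
  <= (2 ^+ (2 * n))^-1 * (1 + 2 `^ ((n - l)%:R - H2 P)).
Proof.
have h1 : (l <= maxn l (n - l))%N := leq_maxl _ _.
have h2 : (n - l <= maxn l (n - l))%N := leq_maxr _ _.
case: hP => hP0 hP1.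
pose C := unif R (bits l) * unif R (bits l) * unif R (bits (maxn l (n - l)))
  * unif R (bits (maxn l (n - l))) * unif R (bits (n - l)) * unif R (bits (n - l)).
pose K := (2 ^ (maxn l (n - l) - (n - l)))%:R : R.
pose S := \sum_t P t ^+ 2.
have Cge0 : 0 <= C by rewrite /C /unif !mulr_ge0 ?invr_ge0 ?ler0n.
have step : @collision_prob R p (maxn l (n - l)) l n hl P <=
  \sum_(x : bits n) \sum_(x' : bits n) P x * P x' * C *
     (#|{: bits l}|%:R * #|{: bits (n - l)}|%:R *
     (#|{: bits (maxn l (n - l))}|%:R * (x == x')%:R + K)).
  rewrite /collision_prob; apply: ler_sum => x _; apply: ler_sum => x' _.
  apply: le_trans (ler_wpM2l _ (@pair_bound R p _ l n hl hp hsize h1 h2 x x')); last first.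
    by rewrite mulr_ge0 // mulr_ge0.
  rewrite le_eqVlt; apply/orP; left; apply/eqP.
  rewrite mulr_sumr; apply: eq_bigr => k _; rewrite mulr_sumr; apply: eq_bigr => k' _.
  rewrite mulr_sumr; apply: eq_bigr => u _; rewrite mulr_sumr; apply: eq_bigr => u' _.
  rewrite mulr_sumr; apply: eq_bigr => v _; rewrite mulr_sumr; apply: eq_bigr => v' _.
  by rewrite /C !mulrA.
apply: (le_trans step).
rewrite dsum //.
have Spos : 0 < \sum_t P t ^+ 2.
  rewrite lt_def sumr_ge0 ?andbT => [|t _]; last by rewrite exprn_ge0.
  apply/eqP => S0.
  have Pz t : P t = 0.
    have := psumr_eq0P (fun i _ => exprn_ge0 2 (hP0 i)) S0 (i := t) isT.
    by move/eqP; rewrite expf_eq0 /= => /eqP.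
  by move: hP1; rewrite big1 // => /esym/eqP; rewrite oner_eq0.
have two0 : (2 : R) != 0 by rewrite pnatr_eq0.
have epow : 2 `^ ((n - l)%:R - H2 P) = 2 ^+ (n - l) * \sum_t P t ^+ 2.
  rewrite /H2 /log2 opprK powRD; last by rewrite two0 implybT.
  rewrite powR_mulrn ?ler0n //; congr (_ * _).
  rewrite /powR (negbTE two0) mulfVK ?lnK //.
  by rewrite gt_eqF // ln_gt0 // ltr1n.
rewrite epow /C /K /unif !card_bits !natrX.
set lam := maxn l (n - l) in h1 h2 *.
set SS := \sum_t P t ^+ 2.
have eD : (2 ^+ l)^-1 * (2 ^+ l)^-1 * (2 ^+ lam)^-1 * (2 ^+ lam)^-1 * (2 ^+ (n - l))^-1 *
   (2 ^+ (n - l))^-1 * (2 ^+ l * 2 ^+ (n - l)) = (2 ^+ (l + lam + lam + (n - l)))^-1 :> R.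
  rewrite !exprD; field.
  by rewrite !expf_neq0.
rewrite eD !mulrDr mulr1 [X in _ <= X]addrC.
apply: lerD.
  rewrite !mulrA; apply: ler_wpM2r; first exact: ltW.
  apply: pow2_frac; lia.
have := @pow2_frac R (lam - (n - l)) (l + lam + lam + (n - l)) 0 (2 * n).
rewrite expr0 mulr1; apply; lia.
Qed.
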